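(* Let $(X,\mathcal{M})$ be a measurable space, $\Sigma$ a compact Hausdorff group with Haar probability measure $\mu_\Sigma$ acting measurably on $X$ via $T_\sigma$. Let $n\in\mathbb{Z}^+$ and let $V$ be a linear subspace of $\mathcal{M}_b(X)^n$ that is closed under $\Sigma$ (i.e. $\gamma\circ T_\sigma\in V$ for all $\gamma\in V$, $\sigma\in\Sigma$) and satisfies $S_\Sigma[V]\subset V$. Let $H:V\times\mathcal{P}(X)\times\mathcal{P}(X)\to[-\infty,\infty)$ and $\Gamma\subset V$, and set $D_H^\Gamma(Q\|P)=\sup_{\gamma\in\Gamma}H(\gamma;Q,P)$. Suppose that for all $Q,P\in\mathcal{P}(X)$ the map $H(\cdot;Q,P)$ is concave and upper semicontinuous on $V$ with respect to the $M(X)$-topology, and that $H(\gamma\circ T_\sigma;Q,P)=H(\gamma;Q\circ T_\sigma^{-1},P\circ T_\sigma^{-1})$ for all $\sigma\in\Sigma$, $\gamma\in V$, $Q,P\in\mathcal{P}(X)$. Then for all $\Sigma$-invariant $Q,P$, $D_H^\Gamma(Q\|P)\le D_H^{S_\Sigma[\Gamma]}(Q\|P)$. If in addition $S_\Sigma[\Gamma]\subset\Gamma$, then $S_\Sigma[\Gamma]=\Gamma^{\mathrm{inv}}_\Sigma$ and $D_H^\Gamma(Q\|P)=D_H^{\Gamma^{\mathrm{inv}}_\Sigma}(Q\|P)$ for all $\Sigma$-invariant $Q,P$.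
   Context: $S_\Sigma[\gamma](x)=\int_\Sigma\gamma(T_\sigma(x))\mu_\Sigma(d\sigma)$, applied componentwise to elements of $\mathcal{M}_b(X)^n$. $\Gamma^{\mathrm{inv}}_\Sigma=\{\gamma\in\Gamma:\gamma\circ T_\sigma=\gamma\ \forall\sigma\}$. A probability measure $P$ is $\Sigma$-invariant if $P\circ T_\sigma^{-1}=P$ for all $\sigma$. $M(X)$-topology: with $M(X)$ the finite signed measures on $X$, for $\nu\in M(X)^n$ let $\tau_\nu(\gamma)=\sum_{i=1}^n\int\gamma^i d\nu_i$; $V$ is given the weakest topology making every $\tau_\nu$ continuous. *)

(* Defs.v *)
From HB Require Import structures.
From mathcomp Require Import all_boot all_order all_algebra.
From mathcomp Require Import all_classical all_reals all_analysis.
Set Implicit Arguments.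
Unset Strict Implicit.
Unset Printing Implicit Defensive.
Import Order.TTheory GRing.Theory Num.Theory.
Import numFieldNormedType.Exports.
Local Open Scope classical_set_scope.
Local Open Scope ring_scope.

#[short(type="topGroupType")]
HB.structure Definition TopGroup := {G of Group G & PointedTopological G}.

Definition compact_hausdorff_group (G : topGroupType) : Prop :=
  [/\ continuous (fun p : G * G => (p.1 * p.2)%g),
      continuous (fun x : G => (x^-1)%g),
      @compact G [set: G] &
      hausdorff_space G].

Notation borel T := (g_sigma_algebraType (@open T)).

(** Haar probability measure of a compact group: a Radon (outer regular on
    Borel sets, inner regular by compact sets on open sets) Borel probability
    measure invariant under left and right translations. *)
Definition haar_probability (G : topGroupType) (R : realType)
    (mu : probability (borel G) R) : Prop :=
  [/\ (forall (s : G) (A : set (borel G)), measurable A ->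
          mu [set (s * a)%g | a in A] = mu A),
      (forall (s : G) (A : set (borel G)), measurable A ->
          mu [set (a * s)%g | a in A] = mu A),
      (forall A : set (borel G), measurable A ->
          mu A = ereal_inf [set mu U | U in [set U : set (borel G) |
                                  @open G U /\ A `<=` U]]) &
      (forall U : set (borel G), @open G U ->
          mu U = ereal_sup [set mu K | K in [set K : set (borel G) |
                                  @compact G K /\ K `<=` U]])].

Definition measurable_action (G : topGroupType) d (X : measurableType d)
    (T : G -> X -> X) : Prop :=
  [/\ (forall x, T 1%g x = x),
      (forall s t x, T (s * t)%g x = T s (T t x)) &
      measurable_fun [set: (borel G * X)%type] (fun p => T p.1 p.2)].

(** Elements of M_b(X)^n are represented as n-families of real functions. *)
Definition vfun (n : nat) (X : Type) (R : Type) := 'I_n -> X -> R.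

Definition Mb (n : nat) d (X : measurableType d) (R : realType)
    (g : vfun n X R) : Prop :=
  forall i, measurable_fun [set: X] (g i) /\ exists M : R, forall x, `|g i x| <= M.

Definition linear_subspace (n : nat) (X : Type) (R : realType)
    (V : set (vfun n X R)) : Prop :=
  [/\ V (fun _ _ => 0),
      (forall f g, V f -> V g -> V (fun i x => f i x + g i x)) &
      (forall (a : R) f, V f -> V (fun i x => a * f i x))].

Definition act_fun (G : Type) (X : Type) (R : Type) (n : nat)
    (T : G -> X -> X) (s : G) (g : vfun n X R) : vfun n X R :=
  fun i x => g i (T s x).

Definition symmetrize (G : topGroupType) (R : realType)
    (mu : probability (borel G) R) d (X : measurableType d) (n : nat)
    (T : G -> X -> X) (g : vfun n X R) : vfun n X R :=
  fun i x => Rintegral mu [set: borel G] (fun s : borel G => g i (T s x)).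

Definition inv_part (G : Type) (X : Type) (R : Type) (n : nat)
    (T : G -> X -> X) (Gam : set (vfun n X R)) : set (vfun n X R) :=
  [set g | Gam g /\ forall s, act_fun T s g = g].

Definition sigma_invariant (G : Type) d (X : measurableType d) (R : realType)
    (T : G -> X -> X) (P : probability X R) : Prop :=
  forall s (A : set X), measurable A -> P (T s @^-1` A) = P A.

Definition is_pushforward (G : Type) d (X : measurableType d) (R : realType)
    (T : G -> X -> X) (s : G) (P P' : probability X R) : Prop :=
  forall A : set X, measurable A -> P' A = P (T s @^-1` A).

(** tau_nu(gamma) = sum_i int gamma^i d nu_i, with the finite signed measure
    nu_i written as nup i - num i (difference of finite measures). *)
Definition tauM (n : nat) d (X : measurableType d) (R : realType)
    (nup num : 'I_n -> {finite_measure set X -> \bar R}) (g : vfun n X R) : R :=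
  \sum_(i < n) (Rintegral (nup i) [set: X] (g i) - Rintegral (num i) [set: X] (g i)).

(** F is upper semicontinuous on V w.r.t. the M(X)-topology (the weakest
    topology making every tau_nu continuous), restricted to V. *)
Definition usc_MX (n : nat) d (X : measurableType d) (R : realType)
    (V : set (vfun n X R)) (F : vfun n X R -> \bar R) : Prop :=
  forall g0, V g0 -> forall c : R, (F g0 < c%:E)%E ->
    exists (k : nat) (nup num : 'I_k -> 'I_n -> {finite_measure set X -> \bar R})
           (e : R), 0 < e /\
      forall g, V g ->
        (forall j, `|tauM (nup j) (num j) g - tauM (nup j) (num j) g0| < e) ->
        (F g < c%:E)%E.

Definition concave_on (n : nat) (X : Type) (R : realType)
    (V : set (vfun n X R)) (F : vfun n X R -> \bar R) : Prop :=
  forall f g (t : R), V f -> V g -> 0 < t < 1 ->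
    (t%:E * F f + (1 - t)%:E * F g <= F (fun i x => (t * f i x + (1 - t) * g i x)%R))%E.

Definition DH (n : nat) d (X : measurableType d) (R : realType)
    (H : vfun n X R -> probability X R -> probability X R -> \bar R)
    (Gam : set (vfun n X R)) (Q P : probability X R) : \bar R :=
  ereal_sup [set H g Q P | g in Gam].

(* Main.v *)
Require Import Defs.
From HB Require Import structures.
From mathcomp Require Import all_boot all_order all_algebra.
From mathcomp Require Import all_classical all_reals all_analysis.
From mathcomp Require Import measurable_realfun ring lra.
Import Order.TTheory GRing.Theory Num.Theory.
Import numFieldNormedType.Exports.
Set Implicit Arguments.
Unset Strict Implicit.
Local Open Scope classical_set_scope.
Local Open Scope ring_scope.
Section S.
Context d (Om : measurableType d) (R : realType).
Definition bm (f : Om -> R) := measurable_fun [set: Om] f /\ exists M : R, forall x, `|f x| <= M.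
Lemma bm_int (mu : {finite_measure set Om -> \bar R}) f : bm f -> mu.-integrable [set: Om] (EFin \o f).
Proof.
case=> mf [M hM]; apply: measurable_bounded_integrable => //.
  by apply: fin_num_fun_lty; exact: fin_num_measure.
exists M; split; first by rewrite num_real.
move=> y My x _; apply: le_trans (hM x) _; exact: ltW.
Qed.
Lemma bm_cst c : bm (fun _ => c).
Proof. by split; [exact: measurable_cst | exists `|c|]. Qed.
Lemma bm_add f g : bm f -> bm g -> bm (fun x => f x + g x).
Proof.
move=> [mf [M hM]] [mg [N hN]]; split; first exact: measurable_funD.
by exists (M + N) => x; apply: le_trans (ler_normD _ _) _; exact: lerD.
Qed.
Lemma bm_mul f g : bm f -> bm g -> bm (fun x => f x * g x).
Proof.
move=> [mf [M hM]] [mg [N hN]]; split; first exact: measurable_funM.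
exists (M * N) => x; rewrite normrM; apply: ler_pM => //.
Qed.
Lemma bm_opp f : bm f -> bm (fun x => - f x).
Proof.
move=> [mf [M hM]]; split; first exact: measurableT_comp.
by exists M => x; rewrite normrN.
Qed.
Lemma bm_sub f g : bm f -> bm g -> bm (fun x => f x - g x).
Proof. by move=> hf hg; apply: bm_add => //; exact: bm_opp. Qed.
Lemma bm_sum I (s : seq I) (F : I -> Om -> R) : (forall i, bm (F i)) ->
  bm (fun x => \sum_(i <- s) F i x).
Proof.
move=> hF; elim: s => [|i s IH].
  by under eq_fun do rewrite big_nil; exact: bm_cst.
by under eq_fun do rewrite big_cons; exact: bm_add.
Qed.
Lemma bm_indic (A : set Om) : measurable A -> bm (\1_A : Om -> R).
Proof.
move=> mA; split; first exact: measurable_indic.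
by exists 1 => x; rewrite indicE; case: (x \in A); rewrite ?normr1 ?normr0.
Qed.
Lemma Rint_sum (mu : {finite_measure set Om -> \bar R}) I (s : seq I) (F : I -> Om -> R) :
  (forall i, bm (F i)) ->
  Rintegral mu [set: Om] (fun x => \sum_(i <- s) F i x) =
  \sum_(i <- s) Rintegral mu [set: Om] (F i).
Proof.
move=> hF; elim: s => [|i s IH].
  rewrite big_nil; under eq_Rintegral do rewrite big_nil.
  by rewrite Rintegral_cst // mul0r.
rewrite big_cons -IH; under eq_Rintegral do rewrite big_cons.
rewrite RintegralD //; first exact: bm_int.
by apply: bm_int; exact: bm_sum.
Qed.
Lemma Rint_bound (mu : {finite_measure set Om -> \bar R}) f M :
  bm f -> (forall x, `|f x| <= M) ->
  `|Rintegral mu [set: Om] f| <= M * fine (mu [set: Om]).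
Proof.
move=> hf hM; apply: le_trans (le_normr_Rintegral _ _) _ => //; first exact: bm_int.
rewrite -Rintegral_cst //; apply: le_Rintegral => //.
- by apply: bm_int; case: hf => mf [N hN]; split; [exact: measurableT_comp | exists N => x; rewrite normr_id].
- exact/bm_int/bm_cst.
Qed.
End S.
Section Fub.
Context d1 d2 (O1 : measurableType d1) (O2 : measurableType d2) (R : realType).
Variables (m1 : {finite_measure set O1 -> \bar R}) (m2 : {finite_measure set O2 -> \bar R}).
Variable F : O1 * O2 -> R.
Hypothesis hF : bm F.

Let m1s : {sigma_finite_measure set O1 -> \bar R} := m1.
Let m2s : {sigma_finite_measure set O2 -> \bar R} := m2.

Let intF : (m1s \x m2s)%E.-integrable [set: O1 * O2] (EFin \o F).
Proof.
case: hF => mF [M hM]; apply: measurable_bounded_integrable => //.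
  rewrite -setXTT. have h := @product_measure1E _ _ _ _ _ m1s m2s setT setT measurableT measurableT. 
  apply: (@le_lt_trans _ _ (m1s setT * m2s setT)%E).
    by rewrite le_eqVlt; apply/orP; left; apply/eqP; exact: h.
  apply: lte_mul_pinfty; first exact: measure_ge0.
    by rewrite ge0_fin_numE ?measure_ge0 //; apply: fin_num_fun_lty; exact: fin_num_measure.
  by apply: fin_num_fun_lty; exact: fin_num_measure.
exists M; split; first by rewrite num_real.
move=> y My x _; apply: le_trans (hM x) _; exact: ltW.
Qed.

Lemma fub_bm1 : bm (fun a => Rintegral m2 [set: O2] (fun b => F (a, b))).
Proof.
split.
  have := measurable_fubini_F intF.
  by move/(measurableT_comp (fine_measurable measurableT)).
case: hF => mF [M hM]; exists (M * fine (m2 [set: O2])) => a.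
apply: Rint_bound; last by move=> b; exact: hM.
split; first exact: measurable_fun_pair2.
by exists M.
Qed.

Lemma fub_eq : Rintegral m2 [set: O2] (fun b => Rintegral m1 [set: O1] (fun a => F (a, b))) =
  Rintegral m1 [set: O1] (fun a => Rintegral m2 [set: O2] (fun b => F (a, b))).
Proof.
case: (hF) => mF [M hM].
rewrite /Rintegral; congr fine.
have e1 : forall b, ((fine (\int[m1]_a (F (a, b))%:E))%:E = \int[m1]_a (F (a, b))%:E)%E.
  move=> b; rewrite fineK //; apply: integrable_fin_num => //.
  by apply: bm_int; split; [exact: measurable_fun_pair1 | exists M => x; exact: hM].
have e2 : forall a, ((fine (\int[m2]_b (F (a, b))%:E))%:E = \int[m2]_b (F (a, b))%:E)%E.
  move=> a; rewrite fineK //; apply: integrable_fin_num => //.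
  by apply: bm_int; split; [exact: measurable_fun_pair2 | exists M => x; exact: hM].
under eq_integral do rewrite e1.
under [RHS]eq_integral do rewrite e2.
by have := Fubini intF.
Qed.
End Fub.
Section Disc.
Context d (Om : measurableType d) (R : realType).
Lemma discretize (mu : probability Om R) k (v : 'I_k -> Om -> R) (delta : R) :
  (forall j, bm (v j)) -> 0 < delta ->
  exists (Fz : finType) (w : Fz -> R) (s : Fz -> Om),
   [/\ forall z, 0 <= w z, \sum_(z : Fz) w z = 1 &
   forall j, `|Rintegral mu setT (v j) - \sum_(z : Fz) w z * v j (s z)| <= delta].
Proof.
move=> hv hd.
have [M hM] := choice (fun j => (hv j).2).
pose B := \sum_(j < k) `|M j|.
have B0 : 0 <= B by apply: sumr_ge0 => *; exact: normr_ge0.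
have hB : forall j x, `|v j x| <= B.
  move=> j x; apply: le_trans (hM j x) _; apply: le_trans (ler_norm _) _.
  rewrite /B (bigD1 j) //= lerDl; apply: sumr_ge0 => *; exact: normr_ge0.
pose y j x := (v j x + B) / delta.
have y0 : forall j x, 0 <= y j x.
  move=> j x; apply: divr_ge0; last exact: ltW.
  by have := hB j x; rewrite ler_norml => /andP[h _]; lra.
pose N := (Num.truncn (2 * B / delta)).+1.
have yN : forall j x, (Num.truncn (y j x) < N)%N.
  move=> j x; rewrite ltnS; apply: le_truncn; rewrite /y ler_pM2r ?invr_gt0 //.
  by have := hB j x; rewrite ler_norml => /andP[_ h]; lra.
pose qj j x : 'I_N := inord (Num.truncn (y j x)).
have qjE : forall j x, nat_of_ord (qj j x) = Num.truncn (y j x).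
  by move=> j x; rewrite inordK // yN.
pose q x : {ffun 'I_k -> 'I_N} := [ffun j => qj j x].
pose A (z : {ffun 'I_k -> 'I_N}) := [set x | q x = z].
have mA : forall z, measurable (A z).
  move=> z.
  have -> : A z = \bigcap_(j in [set: 'I_k]) (y j @^-1` `[((z j : nat)%:R : R), ((z j).+1%:R : R)[).
    apply/seteqP; split => x /=.
      move=> <- j _ /=; rewrite ffunE qjE in_itv /=; exact: truncn_itv (y0 j x).
    move=> h; apply/ffunP => j; rewrite ffunE; apply: val_inj => /=; rewrite qjE.
    apply/eqP; rewrite truncn_eq //; have := h j I; by rewrite /= in_itv.
  apply: fin_bigcap_measurable; first exact: finite_finset.
  move=> j _.
  have my : measurable_fun setT (y j).
    apply: measurable_funM; last exact: measurable_cst.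
    apply: measurable_funD; [exact: (hv j).1 | exact: measurable_cst].
  rewrite -[X in measurable X]setTI; apply: my => //; exact: measurable_itv.
pose s z := xget (point : Om) (A z).
pose w z := Rintegral mu setT (\1_(A z) : Om -> R).
exists {ffun 'I_k -> 'I_N}, w, s; split.
- by move=> z; apply: Rintegral_ge0 => x _; exact: ler0n.
- rewrite /w -Rint_sum; last by move=> z; exact: bm_indic.
  have e : forall x, \sum_(z : {ffun 'I_k -> 'I_N}) (\1_(A z) x : R) = 1.
    move=> x; rewrite (bigD1 (q x)) //= indicE mem_set // big1 ?addr0 // => z hz.
    rewrite indicE memNset //= => e; move: hz; by rewrite e eqxx.
  under eq_Rintegral do rewrite e.
  by rewrite Rintegral_cst // mul1r; exact: (congr1 fine (probability_setT mu)).
- move=> j.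
  pose u x := \sum_(z : {ffun 'I_k -> 'I_N}) v j (s z) * (\1_(A z) x : R).
  have bu : bm u by apply: bm_sum => z; apply: bm_mul; [exact: bm_cst | exact: bm_indic].
  have e1 : \sum_(z : {ffun 'I_k -> 'I_N}) w z * v j (s z) = Rintegral mu setT u.
    rewrite /u Rint_sum; last by move=> z; apply: bm_mul; [exact: bm_cst | exact: bm_indic].
    apply: eq_bigr => z _; rewrite RintegralZl //; first by rewrite mulrC.
    exact/bm_int/bm_indic.
  have uE : forall x, u x = v j (s (q x)).
    move=> x; rewrite /u (bigD1 (q x)) //= indicE mem_set // mulr1 big1 ?addr0 // => z hz.
    rewrite indicE memNset ?mulr0 //= => e; move: hz; by rewrite e eqxx.
  have close : forall x, `|v j x - u x| <= delta.
    move=> x; rewrite uE.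
    have sA : A (q x) (s (q x)) by apply: xgetPex; exists x.
    have eq1 : Num.truncn (y j (s (q x))) = Num.truncn (y j x).
      have sA' : q (s (q x)) = q x by exact: sA.
      have := congr1 (fun f : {ffun 'I_k -> 'I_N} => f j) sA'; rewrite /= !ffunE => h.
      by rewrite -!qjE h.
    have := truncn_itv (y0 j x); have := truncn_itv (y0 j (s (q x))); rewrite eq1.
    rewrite -!natr1.
    set m := (Num.truncn (y j x))%:R.
    rewrite /y !ler_pdivlMr // !ltr_pdivrMr // => /andP[a1 a2] /andP[b1 b2].
    rewrite ler_norml; apply/andP; split; lra.
  rewrite e1 -RintegralB //; [|exact: bm_int (hv j) | exact: bm_int bu].
  have := Rint_bound mu (bm_sub (hv j) bu) close.
  by rewrite (congr1 fine (probability_setT mu)) /= mulr1.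
Qed.
End Disc.
Section Convex.
Context (R : realType) (n : nat) (X : Type).
Lemma sum_w0 (I : Type) (s : seq I) (w G : I -> R) : (forall k, 0 <= w k) ->
  \sum_(k <- s) w k = 0 -> \sum_(k <- s) w k * G k = 0.
Proof.
move=> w0; elim: s => [|i s IH]; first by rewrite !big_nil.
rewrite !big_cons => h.
have hs : 0 <= \sum_(k <- s) w k by apply: sumr_ge0 => *.
have wi0 : w i = 0 by have := w0 i => ?; lra.
by rewrite wi0 mul0r add0r IH //; move: h; rewrite wi0 add0r.
Qed.

Lemma convex_comb (C : set (vfun n X R)) :
  (forall f g t, C f -> C g -> 0 < t < 1 -> C (fun i x => t * f i x + (1 - t) * g i x)) ->
  forall (I : Type) (s : seq I) (w : I -> R) (g : I -> vfun n X R),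
  (forall i, 0 <= w i) -> (forall i, C (g i)) -> \sum_(i <- s) w i = 1 ->
  C (fun j x => \sum_(i <- s) w i * g i j x).
Proof.
move=> hC I s; elim: s => [|i s IH] w g w0 hg.
  by rewrite big_nil => /eqP; rewrite eq_sym oner_eq0.
rewrite big_cons => hs.
have hs0 : 0 <= \sum_(k <- s) w k by apply: sumr_ge0 => *.
have [wi1|wi1] := eqVneq (w i) 1.
  have s0 : \sum_(k <- s) w k = 0 by lra.
  have -> : (fun j x => \sum_(k <- i :: s) w k * g k j x) = g i.
    apply/funext => j; apply/funext => x.
    by rewrite big_cons wi1 mul1r sum_w0 // addr0.
  exact: hg.
have [wi0|wi0] := eqVneq (w i) 0.
  have -> : (fun j x => \sum_(k <- i :: s) w k * g k j x) =
      (fun j x => \sum_(k <- s) w k * g k j x).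
    apply/funext => j; apply/funext => x.
    by rewrite big_cons wi0 mul0r add0r.
  by apply: IH => //; lra.
have wi_gt0 : 0 < w i by rewrite lt_neqAle eq_sym wi0 w0.
have wi_lt1 : w i < 1.
  rewrite lt_neqAle wi1 /=; lra.
have t1 : 1 - w i != 0 by apply/eqP; lra.
pose w' k := w k / (1 - w i).
have h' : C (fun j x => \sum_(k <- s) w' k * g k j x).
  apply: IH => //.
    by move=> k; apply: divr_ge0 => //; lra.
  rewrite /w' -mulr_suml (_ : \sum_(k <- s) w k = 1 - w i); last by lra.
  exact: divff t1.
have := hC _ _ (w i) (hg i) h'; rewrite wi_gt0 wi_lt1 => /(_ isT).
congr C; apply/funext => j; apply/funext => x.
rewrite big_cons mulr_sumr; congr (_ + _); apply: eq_bigr => k _.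
rewrite /w'; field; exact: t1.
Qed.
End Convex.
Section Haar.
Context (R : realType) (Sig : topGroupType) (mu : probability (borel Sig) R).

Lemma rmul_measurable (t : Sig) :
  continuous (fun p : Sig * Sig => (p.1 * p.2)%g) ->
  measurable_fun [set: borel Sig] (fun s : borel Sig => (s * t)%g : borel Sig).
Proof.
move=> hmul.
have ct : continuous (fun s : Sig => (s * t)%g).
  move=> x; apply: (@continuous_comp _ _ _ (fun s : Sig => (s, t)) (fun p : Sig * Sig => (p.1 * p.2)%g) x).
    by apply: cvg_pair; [exact: cvg_id | exact: cvg_cst].
  exact: hmul.
have h := @measurability _ _ (borel Sig) (borel Sig) setT (fun s : borel Sig => (s * t)%g : borel Sig) (@open Sig).
apply: h; first by [].
move=> _ [U oU <-]; rewrite setTI; apply: sub_sigma_algebra.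
exact: open_comp (fun x _ => ct x) oU.
Qed.
End Haar.
Section Haar2.
Context (R : realType) (Sig : topGroupType) (mu : probability (borel Sig) R).
Lemma haar_rint (hmul : continuous (fun p : Sig * Sig => (p.1 * p.2)%g))
  (hright : forall (s : Sig) (A : set (borel Sig)), measurable A -> mu [set (a * s)%g | a in A] = mu A)
  (phi : borel Sig -> R) (hphi : bm phi) (t : Sig) :
  Rintegral mu setT (fun s : borel Sig => phi (s * t)%g) = Rintegral mu setT phi.
Proof.
have mr := rmul_measurable t hmul.
rewrite /Rintegral; congr fine.
have mphi : measurable_fun [set: borel Sig] (EFin \o phi) by apply/measurable_EFinP; exact: hphi.1.
have := @integral_pushforward _ _ _ _ R _ mr mu setT (EFin \o phi) mphi.
rewrite preimage_setT => h.
have hint : bm (fun s : borel Sig => phi (s * t)%g).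
  case: hphi => mp [M hM]; split; first exact: measurableT_comp mp mr.
  by exists M.
have {}h := h (bm_int mu hint) measurableT.
transitivity (\int[pushforward mu (fun s : borel Sig => (s * t)%g : borel Sig)]_y (EFin \o phi) y)%E.
  exact: (esym h).
apply: eq_measure_integral => A mA _.
rewrite /pushforward.
transitivity (mu [set (a * t^-1)%g | a in A]); last exact: hright.
congr (mu _); apply/seteqP; split => x /=.
  by move=> hx; exists (x * t)%g => //; rewrite mulgK.
  by move=> [a ha <-]; rewrite mulgVK.
Qed.
End Haar2.
Section Main.
Context (R : realType) (Sig : topGroupType) (mu : probability (borel Sig) R)
  (d : measure_display) (X : measurableType d) (T : Sig -> X -> X) (n : nat).

Lemma bm_act (mT : measurable_fun [set: (borel Sig * X)%type] (fun p : borel Sig * X => T p.1 p.2))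
  (f : X -> R) : bm f -> forall x, bm (fun s : borel Sig => f (T s x)).
Proof.
move=> [mf [M hM]] x; split; last by exists M.
apply: measurableT_comp mf _; exact: measurable_fun_pair1 mT.
Qed.

Lemma bm_joint (mT : measurable_fun [set: (borel Sig * X)%type] (fun p : borel Sig * X => T p.1 p.2))
  (f : X -> R) : bm f -> bm (fun p : borel Sig * X => f (T p.1 p.2)).
Proof.
move=> [mf [M hM]]; split; last by exists M.
exact: measurableT_comp mf mT.
Qed.

Lemma tau_sym (mT : measurable_fun [set: (borel Sig * X)%type] (fun p : borel Sig * X => T p.1 p.2))
  (nup num : 'I_n -> {finite_measure set X -> \bar R}) (g : vfun n X R) :
  (forall i, bm (g i)) ->
  tauM nup num (symmetrize mu T g) =
  Rintegral mu setT (fun s : borel Sig => tauM nup num (act_fun T s g)).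
Proof.
move=> hg; rewrite /tauM /symmetrize /act_fun /=.
rewrite Rint_sum; last first.
  move=> i; apply: bm_sub.
    exact: (fub_bm1 mu (nup i) (bm_joint mT (hg i))).
  exact: (fub_bm1 mu (num i) (bm_joint mT (hg i))).
apply: eq_bigr => i _.
rewrite RintegralB //; last first.
- exact: bm_int (fub_bm1 mu (num i) (bm_joint mT (hg i))).
- exact: bm_int (fub_bm1 mu (nup i) (bm_joint mT (hg i))).
congr (_ - _).
  exact: (fub_eq mu (nup i) (bm_joint mT (hg i))).
exact: (fub_eq mu (num i) (bm_joint mT (hg i))).
Qed.

Lemma tau_comb (nup num : 'I_n -> {finite_measure set X -> \bar R}) I (r : seq I)
  (w : I -> R) (G : I -> vfun n X R) : (forall z i, bm (G z i)) ->
  tauM nup num (fun i x => \sum_(z <- r) w z * G z i x) =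
  \sum_(z <- r) w z * tauM nup num (G z).
Proof.
move=> hG; rewrite /tauM /=.
have e : forall (m : {finite_measure set X -> \bar R}) i,
    Rintegral m setT (fun x => \sum_(z <- r) w z * G z i x) =
    \sum_(z <- r) w z * Rintegral m setT (G z i).
  move=> m i; rewrite Rint_sum; last by move=> z; apply: bm_mul; [exact: bm_cst | exact: hG].
  apply: eq_bigr => z _; rewrite RintegralZl //; exact: bm_int (hG z i).
under eq_bigr do rewrite !e -sumrB.
rewrite exchange_big /=; apply: eq_bigr => z _.
rewrite mulr_sumr; apply: eq_bigr => i _; by rewrite mulrBr.
Qed.

Lemma key (V : set (vfun n X R))
  (H : vfun n X R -> probability X R -> probability X R -> \bar R)
  (mT : measurable_fun [set: (borel Sig * X)%type] (fun p : borel Sig * X => T p.1 p.2)) :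
  V `<=` @Mb n d X R ->
  linear_subspace V ->
  (forall (s : Sig) g, V g -> V (act_fun T s g)) ->
  symmetrize mu T @` V `<=` V ->
  (forall g Q P, V g -> H g Q P != +oo%E) ->
  (forall Q P, concave_on V (fun g => H g Q P)) ->
  (forall Q P, usc_MX V (fun g => H g Q P)) ->
  (forall (s : Sig) g (Q P Q' P' : probability X R), V g ->
     is_pushforward T s Q Q' -> is_pushforward T s P P' ->
     H (act_fun T s g) Q P = H g Q' P') ->
  forall (Q P : probability X R), sigma_invariant T Q -> sigma_invariant T P ->
  forall g0, V g0 -> (H g0 Q P <= H (symmetrize mu T g0) Q P)%E.
Proof.
move=> hVMb hlin hVact hSV hfin hconc husc hpush Q P iQ iP g0 Vg0.
have hinv : forall s, H (act_fun T s g0) Q P = H g0 Q P.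
  by move=> s; apply: hpush => // A mA; rewrite ?iQ ?iP.
have bg0 : forall i, bm (g0 i) by move=> i; exact: (hVMb _ Vg0 i).
case hg: (H g0 Q P) => [r| |]; last by rewrite leNye.
  2: by have := hfin g0 Q P Vg0; rewrite hg.
rewrite leNgt; apply/negP => hlt.
have VS : V (symmetrize mu T g0) by apply: hSV; exact: imageP.
have [k [nup [num [e [e0 he]]]]] := husc Q P _ VS r hlt.
pose v (j : 'I_k) (s : borel Sig) := tauM (nup j) (num j) (act_fun T s g0).
have bv : forall j, bm (v j).
  move=> j; rewrite /v /tauM /act_fun /=.
  apply: bm_sum => i; apply: bm_sub.
    exact: (fub_bm1 mu (nup j i) (bm_joint mT (bg0 i))).
  exact: (fub_bm1 mu (num j i) (bm_joint mT (bg0 i))).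
have e2 : 0 < e / 2 by apply: divr_gt0.
have [Fz [w [s [w0 w1 hw]]]] := discretize mu bv e2.
pose C := fun g : vfun n X R => V g /\ (r%:E <= H g Q P)%E.
have hC : forall f g t, C f -> C g -> 0 < t < 1 ->
    C (fun i x => t * f i x + (1 - t) * g i x).
  move=> f g t [Vf Hf] [Vg Hg] ht; case: hlin => _ Vadd Vsc.
  split; first exact: Vadd (Vsc t f Vf) (Vsc (1 - t) g Vg).
  apply: le_trans (hconc Q P f g t Vf Vg ht).
  move: (hfin f Q P Vf) (hfin g Q P Vg) Hf Hg.
  case: (H f Q P) => [a| |]; case: (H g Q P) => [b| |] //=.
  rewrite !lee_fin => _ _ ha hb.
  case/andP: ht => t0 t1; nra.
have Cg : C (fun i x => \sum_(z <- index_enum Fz) w z * act_fun T (s z) g0 i x).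
  apply: (convex_comb hC) => //.
  by move=> z; split; [exact: hVact | rewrite hinv hg].
have hj : forall j, `|tauM (nup j) (num j) (fun i x => \sum_(z <- index_enum Fz) w z * act_fun T (s z) g0 i x)
    - tauM (nup j) (num j) (symmetrize mu T g0)| < e.
  move=> j; rewrite tau_comb; last by move=> z i; exact: (hVMb _ (hVact (s z) _ Vg0) i).
  rewrite (tau_sym mT) // distrC; apply: le_lt_trans (hw j) _; lra.
have := he _ Cg.1 hj; rewrite ltNge; case: Cg => _ ->; by [].
Qed.
End Main.

Theorem theorem2 (R : realType) (Sig : topGroupType)
    (mu : probability (borel Sig) R)
    (d : measure_display) (X : measurableType d) (T : Sig -> X -> X)
    (n : nat) (V : set (vfun n X R))
    (H : vfun n X R -> probability X R -> probability X R -> \bar R)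
    (Gam : set (vfun n X R)) :
  compact_hausdorff_group Sig ->
  haar_probability mu ->
  measurable_action T ->
  (0 < n)%N ->
  V `<=` @Mb n d X R ->
  linear_subspace V ->
  (forall (s : Sig) g, V g -> V (act_fun T s g)) ->
  symmetrize mu T @` V `<=` V ->
  Gam `<=` V ->
  (forall g Q P, V g -> H g Q P != +oo%E) ->
  (forall Q P, concave_on V (fun g => H g Q P)) ->
  (forall Q P, usc_MX V (fun g => H g Q P)) ->
  (forall (s : Sig) g (Q P Q' P' : probability X R), V g ->
     is_pushforward T s Q Q' -> is_pushforward T s P P' ->
     H (act_fun T s g) Q P = H g Q' P') ->
  (forall Q P : probability X R, sigma_invariant T Q -> sigma_invariant T P ->
     (DH H Gam Q P <= DH H (symmetrize mu T @` Gam) Q P)%E) /\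
  (symmetrize mu T @` Gam `<=` Gam ->
     symmetrize mu T @` Gam = inv_part T Gam /\
     (forall Q P : probability X R, sigma_invariant T Q -> sigma_invariant T P ->
        DH H Gam Q P = DH H (inv_part T Gam) Q P)).
Proof.
move=> [hmul _ _ _] [_ hr _ _] [T1 Tmul mT] _ hVMb hlin hVact hSV hGV hfin hconc husc hpush.
have part1 : forall Q P : probability X R, sigma_invariant T Q -> sigma_invariant T P ->
    (DH H Gam Q P <= DH H (symmetrize mu T @` Gam) Q P)%E.
  move=> Q P iQ iP; rewrite /DH; apply: ge_ereal_sup => _ [g Gg <-].
  have hk := @key _ _ mu _ _ _ _ _ _ mT hVMb hlin hVact hSV hfin hconc husc hpush _ _ iQ iP _ (hGV _ Gg).
  apply: le_trans hk _.
  apply: ereal_sup_ubound; exists (symmetrize mu T g) => //; exact: imageP.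
split => // hsub.
have eqS : symmetrize mu T @` Gam = inv_part T Gam.
  apply/seteqP; split.
  - move=> _ [g Gg <-]; split; first exact: hsub (imageP _ Gg).
    move=> t; apply/funext => i; apply/funext => x; rewrite /act_fun /symmetrize.
    have bgi : bm (g i) := hVMb _ (hGV _ Gg) i.
    under eq_Rintegral do rewrite -Tmul.
    exact: (haar_rint hmul hr (bm_act mT bgi x) t).
  - move=> g [Gg ginv]; exists g => //; apply/funext => i; apply/funext => x.
    rewrite /symmetrize.
    transitivity (Rintegral mu setT (fun _ : borel Sig => g i x)).
      apply: eq_Rintegral => s _.
      by have := congr1 (fun f : vfun n X R => f i x) (ginv s).
    by rewrite Rintegral_cst // (congr1 fine (probability_setT mu)) mulr1.
split => // Q P iQ iP; apply/le_anti/andP; split.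
  by rewrite -eqS; exact: part1.
rewrite /DH; apply: ereal_sup_le => _ [g [Gg _] <-]; exact: imageP.
Qed.
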